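(* Let $G\in\mathbb{R}^{z_1\times\cdots\times z_n}$ and, for $k=1,\dots,n$, let $H_k\in\mathbb{R}^{m_{k,1}\times\cdots\times m_{k,d_k}}$ with $d_k\ge1$. Let $T=G\circledast[H_1,\dots,H_n]$, a tensor with dimensions indexed by pairs $(k,i)$, $1\le k\le n$, $1\le i\le d_k$, of sizes $s_{k,i}=z_k+m_{k,i}-1$. Then for every $k$ and $i$, $$\operatorname{rank}([k,i],T)\le\begin{cases}\min\big(s_{k,1},\operatorname{rank}(k,G)\big), & \text{if } H_k \text{ is one-dimensional } (d_k=1),\\ \min\big(s_{k,i},\,z_k\operatorname{rank}(i,H_k)\big), & \text{otherwise.}\end{cases}$$
   Context: Tensors are indexed from $0$ and regarded as functions on $\mathbb{Z}^d$ vanishing outside their index ranges. The outer convolution $T=G\circledast[H_1,\dots,H_n]$ is the tensor of order $\sum_k d_k$ with entries $T(t_{1,1},\dots,t_{1,d_1};\dots;t_{n,1},\dots,t_{n,d_n})=\sum_{\tau_1,\dots,\tau_n}G(\tau_1,\dots,\tau_n)\prod_{k=1}^n H_k(t_{k,1}-\tau_k,\,t_{k,2}-\tau_k,\dots,t_{k,d_k}-\tau_k)$, for $t_{k,i}\in\{0,\dots,z_k+m_{k,i}-2\}$. For a tensor $A$, $\operatorname{rank}(j,A)$ is the $j$-th Tucker rank, i.e. the rank of the mode-$j$ matricization of $A$ (for a matrix, its rank; a one-dimensional vector has rank $1$); $\operatorname{rank}([k,i],T)$ is the Tucker rank of $T$ along the dimension indexed by $(k,i)$. *)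

(* Defs.v *)
From HB Require Import structures.
From mathcomp Require Import all_boot all_order all_algebra.
From mathcomp Require Import reals.
Set Implicit Arguments. Unset Strict Implicit. Unset Printing Implicit Defensive.
Import Order.TTheory GRing.Theory Num.Theory.
Local Open Scope ring_scope.

(* A tensor whose modes are indexed by a finite type I, with size m j along
   mode j, is a function on the index set idx m = prod_j {0,..,m j - 1}. *)
Definition idx (I : finType) (m : I -> nat) := {dffun forall j : I, 'I_(m j)}.

Definition oidx (I : finType) (m : I -> nat) (j : I) :=
  {dffun forall p : {i : I | i != j}, 'I_(m (sval p))}.

Definition join (I : finType) (m : I -> nat) (j : I) (a : 'I_(m j))
    (c : oidx m j) : idx m :=
  [ffun i => match i =P j with
             | ReflectT e => cast_ord (f_equal m (esym e)) a
             | ReflectF ne => c (exist (fun i => i != j) i (introN eqP ne))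
             end].

Definition matricize (R : fieldType) (I : finType) (m : I -> nat) (j : I)
    (A : idx m -> R) : 'M[R]_(m j, #|{: oidx m j}|) :=
  \matrix_(a < m j, c < #|{: oidx m j}|) A (join a (enum_val c)).

Definition tucker_rank (R : fieldType) (I : finType) (m : I -> nat) (j : I)
    (A : idx m -> R) : nat := \rank (matricize j A).

(* Zero extension of a tensor to integer index vectors. *)
Definition ext (R : fieldType) (I : finType) (m : I -> nat) (A : idx m -> R)
    (x : I -> int) : R :=
  \sum_(u : idx m) (if [forall i, (u i : nat)%:Z == x i] then A u else 0).

Definition pmode (n : nat) (d : 'I_n -> nat) := {k : 'I_n & 'I_(d k)}.

Definition conv_size (n : nat) (z d : 'I_n -> nat)
    (m : forall k : 'I_n, 'I_(d k) -> nat) (p : pmode d) : nat :=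
  (z (projT1 p) + m (projT1 p) (projT2 p)).-1.

Definition outer_conv (R : fieldType) (n : nat) (z d : 'I_n -> nat)
    (m : forall k : 'I_n, 'I_(d k) -> nat)
    (G : idx z -> R) (H : forall k : 'I_n, idx (m k) -> R)
    (t : idx (conv_size z m)) : R :=
  \sum_(tau : idx z) G tau *
    \prod_(k : 'I_n)
      ext (H k) (fun i : 'I_(d k) =>
                   (t (existT _ k i) : nat)%:Z - (tau k : nat)%:Z).

(* Main.v *)
Require Import Defs.
From HB Require Import structures.
From mathcomp Require Import all_boot all_order all_algebra.
From mathcomp Require Import reals.
Set Implicit Arguments. Unset Strict Implicit. Unset Printing Implicit Defensive.
Import Order.TTheory GRing.Theory Num.Theory.
Local Open Scope ring_scope.

Lemma rank_decomp (R : fieldType) (p N r : nat) (X : finType) (M : 'M[R]_(p,N))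
  (u : X -> 'rV[R]_p) (w : X -> 'I_N -> R) (B : 'M[R]_(r,p)) :
 (forall a c, M a c = \sum_x u x 0 a * w x c) -> (forall x, (u x <= B)%MS) ->
 (\rank M <= \rank B)%N.
Proof.
move=> HM Hu; rewrite -mxrank_tr; apply: mxrankS.
have -> : M^T = \sum_x (\col_c w x c) *m u x.
  apply/matrixP=> c a; rewrite !mxE HM summxE; apply: eq_bigr => x _.
  by rewrite !mxE big_ord1 !mxE mulrC.
by apply: summx_sub => x _; apply: submx_trans (submxMl _ _) (Hu x).
Qed.

Lemma rank_sums_le (R : fieldType) (q s : nat) (F : 'I_q -> 'M[R]_s) :
  (\rank (\sum_(b < q) F b)%MS <= \sum_(b < q) \rank (F b))%N.
Proof.
apply: (big_ind2 (fun (x : 'M[R]_s) y => \rank x <= y)%N).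
- by rewrite mxrank0.
- move=> x1 x2 y1 y2 h1 h2; apply: leq_trans (leq_add h1 h2).
  by rewrite mxrank_adds_leqif.
- by [].
Qed.

Definition jrest (I : finType) (m : I -> nat) (j : I) (u : idx m) : oidx m j :=
  [ffun p => u (sval p)].

Lemma match_reflT (P : Prop) b (r : reflect P b) (A : Type) (f : P -> A)
  (g : ~ P -> A) (p : P) (hf : forall p1 p2, f p1 = f p2) :
  match r with ReflectT e => f e | ReflectF ne => g ne end = f p.
Proof. by case: r => [e|ne]; [apply: hf | case: (ne p)]. Qed.

Lemma match_reflF (P : Prop) b (r : reflect P b) (A : Type) (f : P -> A)
  (g : ~ P -> A) (p : ~ P) (hg : forall p1 p2, g p1 = g p2) :
  match r with ReflectT e => f e | ReflectF ne => g ne end = g p.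
Proof. by case: r => [e|ne]; [case: (p e) | apply: hg]. Qed.

Lemma join_at (I : finType) (m : I -> nat) (j : I) a (c : oidx m j) :
  join a c j = a.
Proof.
rewrite /join ffunE (@match_reflT _ _ _ _ _ _ (erefl j)).
  by apply: val_inj.
by move=> p1 p2; rewrite (eq_irrelevance p1 p2).
Qed.

Lemma join_off (I : finType) (m : I -> nat) (j : I) a (c : oidx m j) p (h : p != j) :
  join a c p = c (exist _ p h).
Proof.
rewrite /join ffunE (@match_reflF _ _ _ _ _ _ (elimN eqP h)).
  by rewrite (bool_irrelevance (introN eqP (elimN eqP h)) h).
by move=> p1 p2; rewrite (bool_irrelevance (introN eqP p1) (introN eqP p2)).
Qed.

Lemma join_indep (I : finType) (m : I -> nat) (j : I) a a' (c : oidx m j) p :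
  p != j -> join a c p = join a' c p.
Proof. by move=> h; rewrite !(join_off _ _ h). Qed.

Lemma join_rest (I : finType) (m : I -> nat) (j : I) (u : idx m) :
  join (u j) (jrest j u) = u.
Proof.
apply/ffunP => p; case: (eqVneq p j) => [e|h].
  by subst p; rewrite join_at.
by rewrite (join_off _ _ h) /jrest ffunE.
Qed.

Lemma rest_join (I : finType) (m : I -> nat) (j : I) a (c : oidx m j) :
  jrest j (join a c) = c.
Proof.
apply/ffunP => -[p h]; rewrite /jrest ffunE /= (join_off _ _ h) //.
Qed.

Lemma sum_join (R : nmodType) (I : finType) (m : I -> nat) (j : I) (F : idx m -> R) :
  \sum_(u : idx m) F u = \sum_(a : 'I_(m j)) \sum_(q : oidx m j) F (join a q).
Proof.
rewrite pair_bigA /= (reindex (fun x : 'I_(m j) * oidx m j => join x.1 x.2)) //.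
exists (fun u : idx m => (u j, jrest j u)) => [[a q] _ | u _] /=.
  by rewrite join_at rest_join.
by rewrite join_rest.
Qed.

Lemma rank_decomp2 (R : fieldType) (p N r : nat) (X1 X2 : finType) (M : 'M[R]_(p,N))
  (u : X1 -> X2 -> 'rV[R]_p) (w : X1 -> X2 -> 'I_N -> R) (B : 'M[R]_(r,p)) :
 (forall a c, M a c = \sum_x1 \sum_x2 u x1 x2 0 a * w x1 x2 c) ->
 (forall x1 x2, (u x1 x2 <= B)%MS) ->
 (\rank M <= \rank B)%N.
Proof.
move=> HM Hu.
apply: (@rank_decomp _ _ _ _ _ M (fun x => u x.1 x.2) (fun x => w x.1 x.2)).
  by move=> a c; rewrite HM pair_bigA.
by move=> x; apply: Hu.
Qed.

Lemma sum_enum (R : nmodType) (T : finType) (F : T -> R) :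
  \sum_(q : T) F q = \sum_(e < #|{: T}|) F (enum_val e).
Proof.
rewrite (reindex (fun e : 'I_#|{: T}| => enum_val e)) //.
by exists (@enum_rank T) => x _; rewrite ?enum_valK ?enum_rankK.
Qed.

Lemma eq_ext (R : fieldType) (I : finType) (m : I -> nat) (A : idx m -> R) x y :
  (forall i, x i = y i) -> ext A x = ext A y.
Proof.
move=> h; apply: eq_bigr => u _.
by rewrite (eq_forallb (P2 := fun i => (u i : nat)%:Z == y i)) // => i; rewrite h.
Qed.

Lemma forall_join (I : finType) (m : I -> nat) (j : I) (h : 'I_(m j)) (q : oidx m j)
  (x : I -> int) :
  [forall i0, ((join h q i0 : nat)%:Z == x i0)] =
  ((h : nat)%:Z == x j) && [forall p : {i0 | i0 != j}, ((q p : nat)%:Z == x (sval p))].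
Proof.
apply/forallP/andP => [H | [H1 /forallP H2] i0].
  split; first by have := H j; rewrite join_at.
  apply/forallP => -[p hp] /=; have := H p; by rewrite (join_off _ _ hp).
case: (eqVneq i0 j) => [->|hp]; first by rewrite join_at.
by rewrite (join_off _ _ hp); apply: (H2 (exist _ i0 hp)).
Qed.

Lemma ext_join (R : fieldType) (I : finType) (m : I -> nat) (j : I) (A : idx m -> R) x :
 ext A x = \sum_(q : oidx m j)
   (if [forall p : {i | i != j}, (q p : nat)%:Z == x (sval p)]
    then \sum_(h : 'I_(m j)) (if (h : nat)%:Z == x j then A (join h q) else 0)
    else 0).
Proof.
rewrite /ext (sum_join j) exchange_big /=; apply: eq_bigr => q _.
case: ifP => hq.
  by apply: eq_bigr => h _; rewrite forall_join hq andbT.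
by apply: big1 => h _; rewrite forall_join hq andbF.
Qed.

Lemma existT_neq1 (n : nat) (d : 'I_n -> nat) k k' (i : 'I_(d k)) (i' : 'I_(d k')) :
  k' != k -> (existT _ k' i' : pmode d) != existT _ k i.
Proof. by apply: contra => /eqP e; apply/eqP; exact: (congr1 tag e). Qed.

Lemma existT_neq2 (n : nat) (d : 'I_n -> nat) k (i i' : 'I_(d k)) :
  i' != i -> (existT _ k i' : pmode d) != existT _ k i.
Proof. by rewrite eq_Tagged. Qed.

Definition shiftmx (R : fieldType) (s mm b : nat) : 'M[R]_(s, mm) :=
  \matrix_(a < s, h < mm) ((a : nat) == (h : nat) + b)%N%:R.

Lemma case2 (R : fieldType) (n : nat) (z d : 'I_n -> nat)
    (m : forall k : 'I_n, 'I_(d k) -> nat)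
    (G : idx z -> R) (H : forall k : 'I_n, idx (m k) -> R) (k : 'I_n) (i : 'I_(d k))
    (a0 : 'I_(conv_size z m (existT _ k i))) :
  (tucker_rank (existT (fun k => 'I_(d k)) k i) (outer_conv G H)
     <= z k * tucker_rank i (H k))%N.
Proof.
rewrite /tucker_rank.
set Hm := matricize i (H k).
pose S b := (shiftmx R (conv_size z m (existT _ k i)) (m k i) b *m Hm)^T.
pose B := (\sum_(b < z k) <<S b>>)%MS.
apply: (@leq_trans (\rank B)).
  apply: (@rank_decomp2 _ _ _ _ (idx z) 'I_#|{: oidx (m k) i}| _
     (fun tau e => row e (S (tau k)))
     (fun tau e c => G tau *
        (if [forall p : {i0 | i0 != i}, ((enum_val e p : nat)%:Z ==
              (join a0 (enum_val c) (existT _ k (sval p)) : nat)%:Z - (tau k : nat)%:Z)]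
         then 1 else 0) *
        \prod_(k' | k' != k) ext (H k') (fun i' =>
              (join a0 (enum_val c) (existT _ k' i') : nat)%:Z - (tau k' : nat)%:Z))).
    move=> a c; rewrite mxE /outer_conv.
    apply: eq_bigr => tau _.
    rewrite (bigD1 k) //= (ext_join i) sum_enum.
    rewrite mulr_suml mulr_sumr; apply: eq_bigr => e _.
    rewrite !mxE -!mulrA [RHS]mulrCA; congr (_ * _).
    rewrite mulrA; congr (_ * _).
      rewrite (eq_forallb (P2 := fun p => (enum_val e p : nat)%:Z ==
              (join a0 (enum_val c) (existT _ k (sval p)) : nat)%:Z - (tau k : nat)%:Z)); last first.
        by move=> p; rewrite (join_indep a a0 _ (existT_neq2 (svalP p))).
      case: ifP => _; last by rewrite mulr0.
      rewrite mulr1 join_at; apply: eq_bigr => h _.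
      rewrite /shiftmx /Hm /matricize !mxE.
      have -> : ((h : nat)%:Z == (a : nat)%:Z - (tau k : nat)%:Z) = ((a : nat) == h + tau k)%N.
        by rewrite eq_sym subr_eq -PoszD eqz_nat.
      by case: eqP => _; rewrite ?mul1r ?mul0r.
    apply: eq_bigr => k' hk'; apply: eq_ext => i1.
    by rewrite (join_indep a a0 _ (existT_neq1 _ _ hk')).
  move=> tau e; apply: submx_trans (row_sub _ _) _.
  by apply: (sumsmx_sup (tau k)) => //; rewrite genmxE.
rewrite /B; apply: (leq_trans (rank_sums_le (fun b : 'I_(z k) => <<S b>>%MS))).
rewrite -[X in (_ <= X * _)%N]card_ord -sum_nat_const.
by apply: leq_sum => b _; rewrite genmxE mxrank_tr mxrankM_maxr.
Qed.

Lemma case1 (R : fieldType) (n : nat) (z d : 'I_n -> nat)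
    (m : forall k : 'I_n, 'I_(d k) -> nat)
    (G : idx z -> R) (H : forall k : 'I_n, idx (m k) -> R) (k : 'I_n) (i : 'I_(d k))
    (hd : d k = 1%N)
    (a0 : 'I_(conv_size z m (existT _ k i))) (b0 : 'I_(z k)) :
  (tucker_rank (existT (fun k => 'I_(d k)) k i) (outer_conv G H)
     <= tucker_rank k G)%N.
Proof.
rewrite /tucker_rank.
set Gm := matricize k G.
pose C := \matrix_(a < conv_size z m (existT _ k i), b < z k)
            ext (H k) (fun _ => (a : nat)%:Z - (b : nat)%:Z).
pose B := (C *m Gm)^T.
apply: (@leq_trans (\rank B)); last by rewrite mxrank_tr mxrankM_maxr.
apply: (@rank_decomp _ _ _ _ 'I_#|{: oidx z k}| _ (fun e => row e B)
  (fun e c => \prod_(k' | k' != k) ext (H k') (fun i' =>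
      (join a0 (enum_val c) (existT _ k' i') : nat)%:Z -
      (join b0 (enum_val e) k' : nat)%:Z))); last by move=> e; apply: row_sub.
move=> a c; rewrite mxE /outer_conv (sum_join k) exchange_big /=.
rewrite (@sum_enum _ (oidx z k)); apply: eq_bigr => e _.
rewrite !mxE mulr_suml; apply: eq_bigr => b _; rewrite !mxE.
rewrite (bigD1 k) //= mulrCA -[RHS]mulrA; congr (_ * (_ * _)).
  apply: eq_ext => i'; rewrite join_at.
  have -> : i' = i.
    have h1 : (val i < 1)%N by rewrite -hd ltn_ord.
    have h2 : (val i' < 1)%N by rewrite -hd ltn_ord.
    by apply: val_inj; move: h1 h2; rewrite !ltnS !leqn0 => /eqP -> /eqP ->.
  by rewrite join_at.
apply: eq_bigr => k' hk'; apply: eq_ext => i1.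
by rewrite (join_indep a a0 _ (existT_neq1 _ _ hk')) (join_indep b b0 _ hk').
Qed.

Theorem theorem31 (R : realType) (n : nat) (z d : 'I_n -> nat)
    (m : forall k : 'I_n, 'I_(d k) -> nat)
    (G : idx z -> R) (H : forall k : 'I_n, idx (m k) -> R) :
  (forall k, (0 < z k)%N) ->
  (forall k, (0 < d k)%N) ->
  (forall k i, (0 < m k i)%N) ->
  forall (k : 'I_n) (i : 'I_(d k)),
    (tucker_rank (existT (fun k => 'I_(d k)) k i) (outer_conv G H)
     <= (if d k == 1%N
         then minn (conv_size z m (existT _ k i)) (tucker_rank k G)
         else minn (conv_size z m (existT _ k i))
                   (z k * tucker_rank i (H k))))%N.
Proof.
move=> hz hd hm k i.
have hs : (0 < conv_size z m (existT _ k i))%N.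
  rewrite /conv_size /=; case: (z k) (hz k) => // zk _.
  by rewrite addSn /= addn_gt0 hm orbT.
pose a0 := Ordinal hs.
case: ifP => hd1; rewrite leq_min; apply/andP; split.
- by rewrite /tucker_rank rank_leq_row.
- exact: (case1 G H (eqP hd1) a0 (Ordinal (hz k))).
- by rewrite /tucker_rank rank_leq_row.
- exact: (case2 G H a0).
Qed.
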